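(* Let $2\le m\le n$ and let $G=P_m\times P_n$ be the rectangular grid with vertex set $\{1,\dots,m\}\times\{1,\dots,n\}$, two vertices being adjacent iff they differ by $1$ in exactly one coordinate. Then the boundary cycle of $G$ (the cycle through all vertices with $i\in\{1,m\}$ or $j\in\{1,n\}$) is an $(m-1)$-supported cycle in $G$.
   Context: A cycle $C$ in a graph $G$ is $k$-supported if it can be partitioned into three edge-disjoint paths $I_1,I_2,I_3$, with $I_1\cap I_2$, $I_2\cap I_3$, $I_3\cap I_1$ each a single vertex, such that for all vertices $u_i\in V(I_i)$ ($i=1,2,3$), $\max_{i,j\in\{1,2,3\}} d_G(u_i,u_j)\ge k$, where $d_G$ is the graph distance. *)

(* Defs.v *)
From mathcomp Require Import all_boot.
Set Implicit Arguments. Unset Strict Implicit. Unset Printing Implicit Defensive.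

Section GraphDefs.
Variable T : finType.
Variable e : rel T.

Definition is_graph_cycle (c : seq T) : Prop :=
  [/\ uniq c, cycle e c & 3 <= size c].

(* d_G(u,v) >= k : every walk from u to v has at least k edges
   (d_G(u,v) = +oo if there is no walk). *)
Definition dist_ge (u v : T) (k : nat) : Prop :=
  forall p : seq T, path e u p -> last u p = v -> k <= size p.

(* k-supported cycle: the cycle c is split (after a rotation) into three
   consecutive nonempty blocks; the three paths I_1, I_2, I_3 are the arcs
   x1::t1 ++ [x2], x2::t2 ++ [x3], x3::t3 ++ [x1]; these are edge-disjoint,
   cover C, and pairwise meet in exactly one vertex. *)
Definition k_supported (c : seq T) (k : nat) : Prop :=
  is_graph_cycle c /\
  exists (r : nat) (x1 x2 x3 : T) (t1 t2 t3 : seq T),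
    rot r c = (x1 :: t1) ++ (x2 :: t2) ++ (x3 :: t3) /\
    let I := [:: x1 :: rcons t1 x2; x2 :: rcons t2 x3; x3 :: rcons t3 x1] in
    forall u : 'I_3 -> T, (forall i : 'I_3, u i \in nth [::] I i) ->
      exists i j : 'I_3, dist_ge (u i) (u j) k.
End GraphDefs.

(* Grid P_m x P_n on vertex set 'I_m * 'I_n (0-indexed coordinates). *)
Definition grid_adj (m n : nat) : rel ('I_m * 'I_n) :=
  fun u v =>
    ((u.1 == v.1) && ((u.2.+1 == v.2 :> nat) || (v.2.+1 == u.2 :> nat)))
    || ((u.2 == v.2) && ((u.1.+1 == v.1 :> nat) || (v.1.+1 == u.1 :> nat))).

Definition boundary_nat (m n : nat) : seq (nat * nat) :=
  [seq (0, j) | j <- iota 0 n]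
  ++ [seq (i, n.-1) | i <- iota 1 m.-1]
  ++ [seq (m.-1, n.-1 - j) | j <- iota 1 n.-1]
  ++ [seq (m.-1 - i, 0) | i <- iota 1 (m - 2)].

Definition to_grid (m n : nat) (p : nat * nat) : option ('I_m * 'I_n) :=
  match insub p.1 : option 'I_m, insub p.2 : option 'I_n with
  | Some a, Some b => Some (a, b)
  | _, _ => None
  end.

Definition boundary_cycle (m n : nat) : seq ('I_m * 'I_n) :=
  pmap (@to_grid m n) (boundary_nat m n).

(* Main.v *)
Require Import Defs.
From mathcomp Require Import all_boot.
From mathcomp Require Import zify.

Definition nadj (p q : nat * nat) : bool :=
  ((p.1 == q.1) && ((p.2.+1 == q.2) || (q.2.+1 == p.2)))
  || ((p.2 == q.2) && ((p.1.+1 == q.1) || (q.1.+1 == p.1))).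

Lemma pmi (e : rel (nat * nat)) g k l x : x = g k ->
  (forall j, k <= j -> j < k + l -> e (g j) (g j.+1)) ->
  path e x [seq g j | j <- iota k.+1 l].
Proof.
elim: l k x => [|l IH] k x -> H //=.
apply/andP; split; first by apply: H; lia.
apply: IH => // j H1 H2; apply: H; lia.
Qed.

Lemma lmi g k l (x : nat * nat) : x = g k ->
  last x [seq g j | j <- iota k.+1 l] = g (k + l).
Proof.
elim: l k x => [|l IH] k x -> /=; first by rewrite addn0.
by rewrite (IH k.+1 (g k.+1)) // addnS.
Qed.

Lemma disj g h s l s' l' :
  (forall j k, s <= j < s + l -> s' <= k < s' + l' -> g j <> h k :> nat * nat) ->
  ~~ has (mem [seq h i | i <- iota s' l']) [seq g i | i <- iota s l].
Proof.
move=> H; apply/hasPn => x /mapP [j Hj ->]; apply/negP => /mapP [k Hk E].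
by apply: (H j k) => //; [move: Hj | move: Hk]; rewrite mem_iota.
Qed.

Lemma notin1 g (x : nat * nat) s l :
  (forall j, s <= j < s + l -> x <> g j) -> x \notin [seq g i | i <- iota s l].
Proof.
move=> H; apply/negP => /mapP [j Hj E]; apply: (H j) => //; move: Hj; by rewrite mem_iota.
Qed.

Lemma uniqmi g s l :
  (forall j k, s <= j < s + l -> s <= k < s + l -> g j = g k :> nat * nat -> j = k) ->
  uniq [seq g i | i <- iota s l].
Proof.
move=> H; rewrite map_inj_in_uniq ?iota_uniq // => j k Hj Hk; apply: H.
  by move: Hj; rewrite mem_iota. by move: Hk; rewrite mem_iota.
Qed.

Lemma cycle_cons T (e : rel T) x s : cycle e (x :: s) = path e x (rcons s x).
Proof. by []. Qed.

Section Q.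
Variables a b : nat.
Definition g1 (j : nat) := (0, j).
Definition g2 (i : nat) := (i, b.+1).
Definition g3 (j : nat) := (a.+1, b.+1 - j).
Definition g4 (i : nat) := (a.+1 - i, 0).
Definition S1 := [seq g1 j | j <- iota 1 b.+1].
Definition S2 := [seq g2 j | j <- iota 1 a.+1].
Definition S3 := [seq g3 j | j <- iota 1 b.+1].
Definition S4 := [seq g4 j | j <- iota 1 a].
Definition Q := (0, 0) :: S1 ++ S2 ++ S3 ++ S4.

Lemma P_eq : boundary_nat a.+2 b.+2 = Q.
Proof. rewrite /boundary_nat /Q /S4. have -> : a.+2 - 2 = a by lia. done. Qed.

Lemma Q_cycle : cycle nadj Q.
Proof.
rewrite /Q cycle_cons !rcons_cat !cat_path rcons_path.
rewrite /S1 (@lmi g1 0) // /S2 (@lmi g2 0) //.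
rewrite /S3 (@lmi g3 0); last by rewrite /g3 subn0.
rewrite /S4 (@lmi g4 0); last by rewrite /g3 /g4; congr pair; lia.
apply/and5P; split.
- apply: pmi => // j H1 H2; rewrite /nadj /g1 /=; lia.
- apply: pmi => // j H1 H2; rewrite /nadj /g2 /=; lia.
- apply: pmi; first by rewrite /g3 subn0.
  move=> j H1 H2; rewrite /nadj /g3 /=; lia.
- apply: pmi; first by rewrite /g3 /g4; congr pair; lia.
  move=> j H1 H2; rewrite /nadj /g4 /=; lia.
- rewrite /nadj /g4 /=; lia.
Qed.

Lemma Q_uniq : uniq Q.
Proof.
rewrite /Q cons_uniq !mem_cat !cat_uniq !has_cat /S1 /S2 /S3 /S4.
repeat (match goal with |- is_true (_ && _) => apply/andP; split | |- is_true (~~ (_ || _)) => apply/norP; split end);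
  try (apply: notin1 => j Hj E; rewrite /g1 /g2 /g3 /g4 in E; case: E; lia);
  try (apply: disj => j k Hj Hk E; rewrite /g1 /g2 /g3 /g4 in E; case: E; lia);
  try (apply: uniqmi => j k Hj Hk E; rewrite /g1 /g2 /g3 /g4 in E; case: E; lia).
Qed.

End Q.

Lemma split_mi (g : nat -> nat * nat) k l :
  [seq g j | j <- iota k l.+1] = [seq g j | j <- iota k l] ++ [:: g (k + l)].
Proof. by rewrite -addn1 iotaD map_cat. Qed.

Lemma Q_split a b : Q a b = (0, 0) :: [seq g1 j | j <- iota 1 b] ++ (0, b.+1) ::
   [seq g2 b j | j <- iota 1 a] ++ (a.+1, b.+1) :: (S3 a b ++ S4 a).
Proof. by rewrite /Q /S1 /S2 !split_mi -!catA. Qed.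

Lemma inmi (g : nat -> nat * nat) s l p : p \in [seq g j | j <- iota s l] ->
  exists j, s <= j < s + l /\ p = g j.
Proof. by case/mapP => j; rewrite mem_iota => Hj ->; exists j. Qed.

Section Grid.
Variables m n : nat.
Definition fv (v : 'I_m * 'I_n) : nat * nat := (val v.1, val v.2).

Lemma to_grid_some p : p.1 < m -> p.2 < n -> exists u, to_grid m n p = Some u /\ fv u = p.
Proof.
move=> h1 h2; rewrite /to_grid (insubT (fun x => x < m) h1) (insubT (fun x => x < n) h2).
by exists (Ordinal h1, Ordinal h2); split => //; case: p h1 h2.
Qed.

Lemma to_grid_f p u : to_grid m n p = Some u -> fv u = p.
Proof.
rewrite /to_grid; case: insubP => [a Ha Ea|]//; case: insubP => [b' Hb Eb|] // [<-].
by rewrite /fv /= Ea Eb; case: p Ha Hb Ea Eb.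
Qed.

Lemma ocan : ocancel (to_grid m n) fv.
Proof. move=> p; case E: (to_grid m n p) => [u|] //=; exact: to_grid_f. Qed.

Lemma map_pmap_all s : all (fun p => (p.1 < m) && (p.2 < n)) s ->
  map fv (pmap (to_grid m n) s) = s.
Proof.
elim: s => [|p s IH] //= /andP [/andP [h1 h2] Hs].
have [u [-> Hu]] := @to_grid_some p h1 h2.
by rewrite /= Hu IH.
Qed.

Lemma pmap_cons_some p s u : to_grid m n p = Some u ->
  pmap (to_grid m n) (p :: s) = u :: pmap (to_grid m n) s.
Proof. by move=> /= ->. Qed.

Lemma mem_f u s : u \in pmap (to_grid m n) s -> fv u \in s.
Proof. by rewrite mem_pmap => /mapP [p Hp /esym /to_grid_f ->]. Qed.

Lemma adjE u v : grid_adj u v = nadj (fv u) (fv v).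
Proof. by []. Qed.

Lemma dist_bound (u : 'I_m * 'I_n) p : path (@grid_adj m n) u p ->
  let v := last u p in
  [/\ (v.1 : nat) <= u.1 + size p, (u.1 : nat) <= v.1 + size p,
      (v.2 : nat) <= u.2 + size p & (u.2 : nat) <= v.2 + size p].
Proof.
elim: p u => [|x p IH] u /=; first by rewrite !addn0.
case/andP => Ha /IH [h1 h2 h3 h4].
move: Ha; rewrite adjE /nadj /fv /= => Ha.
split; lia.
Qed.
End Grid.

Theorem mainTheorem5 (m n : nat) (hm : 2 <= m) (hmn : m <= n) :
  k_supported (@grid_adj m n) (boundary_cycle m n) (m - 1).
Proof.
move: hm hmn; case: m => [|[|a]] //; case: n => [|[|b]] // _ hab.
set c := boundary_cycle a.+2 b.+2.
have Hall : all (fun p => (p.1 < a.+2) && (p.2 < b.+2)) (Q a b).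
  apply/allP => p; rewrite /Q /S1 /S2 /S3 /S4 in_cons !mem_cat.
  case/orP => [/eqP -> //|].
  case/orP => [/inmi [j [Hj ->]]|]; first by rewrite /g1 /=; lia.
  case/orP => [/inmi [j [Hj ->]]|]; first by rewrite /g2 /=; lia.
  case/orP => [/inmi [j [Hj ->]]|]; first by rewrite /g3 /=; lia.
  by move=> /inmi [j [Hj ->]]; rewrite /g4 /=; lia.
have Hc : map (@fv _ _) c = Q a b by rewrite /c /boundary_cycle P_eq map_pmap_all.
have [v1 [Hv1 Fv1]] := @to_grid_some a.+2 b.+2 (0, 0) isT isT.
have [v2 [Hv2 Fv2]] := @to_grid_some a.+2 b.+2 (0, b.+1) isT (ltnSn _).
have [v3 [Hv3 Fv3]] := @to_grid_some a.+2 b.+2 (a.+1, b.+1) (ltnSn _) (ltnSn _).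
set T1 := [seq g1 j | j <- iota 1 b].
set T2 := [seq g2 b j | j <- iota 1 a].
set T3 := S3 a b ++ S4 a.
set t1 := pmap (to_grid a.+2 b.+2) T1.
set t2 := pmap (to_grid a.+2 b.+2) T2.
set t3 := pmap (to_grid a.+2 b.+2) T3.
have Hdec : c = v1 :: t1 ++ v2 :: t2 ++ v3 :: t3.
  rewrite /c /boundary_cycle P_eq Q_split (@pmap_cons_some _ _ _ _ _ Hv1) pmap_cat.
  by rewrite (@pmap_cons_some _ _ _ _ _ Hv2) pmap_cat (@pmap_cons_some _ _ _ _ _ Hv3).
split.
  split.
  - rewrite /c /boundary_cycle; apply: pmap_uniq; first exact: ocan.
    by rewrite P_eq Q_uniq.
  - have := Q_cycle a b; rewrite -Hc cycle_map.
    by rewrite (@eq_cycle _ _ (@grid_adj a.+2 b.+2)) // => u v; rewrite adjE.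
  - by rewrite Hdec /= size_cat /= size_cat /=; lia.
exists 0, v1, v2, v3, t1, t2, t3; split; first by rewrite rot0.
cbv zeta; move=> u Hu.
have H0 := Hu ord0; have H1 := Hu (@Ordinal 3 1 isT); have H2 := Hu (@Ordinal 3 2 isT).
simpl in H0, H1, H2.
have C0 : (u ord0).1 = 0 :> nat.
  move: H0; rewrite in_cons mem_rcons in_cons => /or3P [/eqP ->|/eqP ->|/mem_f].
  - by case: Fv1.
  - by case: Fv2.
  - by case/inmi => j [_]; rewrite /fv /g1 => -[].
have C1 : (u (@Ordinal 3 1 isT)).2 = b.+1 :> nat.
  move: H1; rewrite in_cons mem_rcons in_cons => /or3P [/eqP ->|/eqP ->|/mem_f].
  - by case: Fv2.
  - by case: Fv3.
  - by case/inmi => j [_]; rewrite /fv /g2 => -[].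
have C2 : (u (@Ordinal 3 2 isT)).1 = a.+1 :> nat \/ (u (@Ordinal 3 2 isT)).2 = 0 :> nat.
  move: H2; rewrite in_cons mem_rcons in_cons => /or3P [/eqP ->|/eqP ->|/mem_f].
  - by left; case: Fv3.
  - by right; case: Fv1.
  - rewrite mem_cat => /orP [/inmi|/inmi] [j [_]]; rewrite /fv /g3 /g4 => -[] ; by [left | right].
case: C2 => C2.
  exists ord0, (@Ordinal 3 2 isT) => p Hp Hl.
  have [h1 h2 h3 h4] := @dist_bound _ _ _ _ Hp; rewrite Hl in h1 h2 h3 h4; rewrite ?C0 ?C1 ?C2 in h1 h2 h3 h4; move: h1; rewrite add0n subn1 /=; done.
exists (@Ordinal 3 1 isT), (@Ordinal 3 2 isT) => p Hp Hl.
have [h1 h2 h3 h4] := @dist_bound _ _ _ _ Hp; rewrite Hl in h1 h2 h3 h4; rewrite ?C0 ?C1 ?C2 in h1 h2 h3 h4; move: h4; rewrite add0n subn1 /= => h4; apply: leq_trans h4; by rewrite -ltnS.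
Qed.
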